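(* Let $H=\sum_{i=1}^{3}E_i|E_i\rangle\langle E_i|$ be a non-degenerate Hamiltonian on a qutrit (distinct $E_1,E_2,E_3$, orthonormal eigenbasis $\{|E_i\rangle\}$), and let $|\psi_0\rangle=\sum_{i=1}^3c_i|E_i\rangle$ with $\sum_i|c_i|^2=1$. Let $\{|k_n\rangle\}_n$ be the Krylov basis generated from $|k_0\rangle=|\psi_0\rangle$ and $H$ by the Lanczos algorithm, and let $K(t)=\sum_n n|\langle k_n|e^{-iHt}|\psi_0\rangle|^2$ be the spread complexity. Put $C_{ij}=|c_i||c_j|$, $\omega_{ij}=E_i-E_j$, $b_1^2=\sum_{i<j}C_{ij}^2\omega_{ij}^2$, $N=\left(C_{23}^2\omega_{23}^2+C_{31}^2\omega_{31}^2+C_{12}^2\omega_{12}^2\right)^{-1/2}$, and $$\Omega(\omega_{12},\omega_{23})=\omega_{23}e^{-i\frac{(E_1+E_2)t}{2}}\sin\!\left(\frac{\omega_{12}t}{2}\right)+\omega_{12}e^{-i\frac{(E_2+E_3)t}{2}}\sin\!\left(\frac{\omega_{23}t}{2}\right).$$ Then $$K(t)=\frac{4}{b_1^2}\left|\sum_{i<j}C_{ij}^2\,\omega_{ij}\sin\!\left(\frac{\omega_{ij}t}{2}\right)e^{-i\frac{(E_i+E_j)t}{2}}\right|^2+8N^2C_{12}C_{23}C_{31}\,|\Omega(\omega_{12},\omega_{23})|^2.$$ *)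

(* Defs.v *)
From HB Require Import structures.
From mathcomp Require Import all_boot all_order all_algebra.
From mathcomp Require Import all_classical all_reals.
From mathcomp Require Import trigo.
From mathcomp Require Import complex.

Set Implicit Arguments.
Unset Strict Implicit.
Unset Printing Implicit Defensive.

Import Order.TTheory GRing.Theory Num.Theory.
Local Open Scope ring_scope.
Local Open Scope complex_scope.

Section QutritKrylov.
Variable R : realType.

Notation vec := 'cV[R[i]]_3.

Definition braket (u v : vec) : R[i] := \sum_(k < 3) (u k 0)^* * v k 0.

Definition vnorm (u : vec) : R := Num.sqrt (\sum_(k < 3) (Normc.normc (u k 0)) ^+ 2).

Definition expi (x : R) : R[i] := (cos x) +i* (sin x).

Definition hamiltonian (e : 'I_3 -> vec) (E : 'I_3 -> R) (v : vec) : vec :=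
  \sum_(j < 3) ((E j)%:C * braket (e j) v) *: e j.

(* e^{-iHt} = sum_i e^{-i E_i t} |E_i><E_i| (spectral functional calculus of H). *)
Definition evolution (e : 'I_3 -> vec) (E : 'I_3 -> R) (t : R) (v : vec) : vec :=
  \sum_(j < 3) (expi (- (E j * t)) * braket (e j) v) *: e j.

(* State = (|k_{n-1}>, |k_n>, b_n), with |k_{-1}> = 0, b_0 = 0.
   a_n = <k_n|H|k_n>, |A_{n+1}> = (H - a_n)|k_n> - b_n |k_{n-1}>,
   b_{n+1} = || A_{n+1} ||, |k_{n+1}> = b_{n+1}^{-1} |A_{n+1}>.
   When b_{n+1} = 0 the algorithm terminates; since 0^-1 = 0 this convention
   makes all further |k_m> equal to 0, so they do not contribute to K(t). *)
Definition lanczos_step (H : vec -> vec) (s : vec * vec * R) : vec * vec * R :=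
  let: (kprev, k, b) := s in
  let a := braket k (H k) in
  let A := H k - a *: k - b%:C *: kprev in
  let b' := vnorm A in
  (k, (b'%:C)^-1 *: A, b').

Fixpoint lanczos (H : vec -> vec) (k0 : vec) (n : nat) : vec * vec * R :=
  match n with
  | 0 => (0, k0, 0)
  | m.+1 => lanczos_step H (lanczos H k0 m)
  end.

Definition krylov (H : vec -> vec) (k0 : vec) (n : nat) : vec :=
  (lanczos H k0 n).1.2.

(* Spread complexity K(t) = sum_n n |<k_n| e^{-iHt} |psi_0>|^2; the Krylov basis
   of a qutrit has at most 3 elements (n = 0, 1, 2). *)
Definition spread_complexity (e : 'I_3 -> vec) (E : 'I_3 -> R) (psi0 : vec) (t : R) : R :=
  \sum_(n < 3) n%:R *
    (Normc.normc (braket (krylov (hamiltonian e E) psi0 n) (evolution e E t psi0)) ^+ 2).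

Definition cabs (z : R[i]) : R := Normc.normc z.

End QutritKrylov.

(* The indices 1, 2, 3 of the paper (eigenbasis labels) as elements of 'I_3. *)
Definition q1 : 'I_3 := @Ordinal 3 0 isT.
Definition q2 : 'I_3 := @Ordinal 3 1 isT.
Definition q3 : 'I_3 := @Ordinal 3 2 isT.

(* Main.v *)
Require Import Defs.
From HB Require Import structures.
From mathcomp Require Import all_boot all_order all_algebra.
From mathcomp Require Import all_classical all_reals.
From mathcomp Require Import trigo.
From mathcomp Require Import complex.
From mathcomp Require Import ring lra.
Import Order.TTheory GRing.Theory Num.Theory.
Local Open Scope ring_scope.
Local Open Scope complex_scope.

Definition mk {R : realType} (e : 'I_3 -> 'cV[R[i]]_3) (x : 'I_3 -> R[i]) :=
  \sum_(j < 3) x j *: e j.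

Lemma braket_mkr {R : realType} (e : 'I_3 -> 'cV[R[i]]_3) u x :
  braket u (mk e x) = \sum_(j < 3) x j * braket u (e j).
Proof.
rewrite /braket /mk.
under eq_bigr do rewrite summxE big_distrr /=.
rewrite exchange_big /=; apply: eq_bigr => j _.
rewrite big_distrr /=; apply: eq_bigr => k _.
by rewrite mxE mulrCA.
Qed.

Lemma braket_mkl {R : realType} (e : 'I_3 -> 'cV[R[i]]_3) v x :
  braket (mk e x) v = \sum_(j < 3) (x j)^*%R * braket (e j) v.
Proof.
rewrite /braket /mk.
under eq_bigr do rewrite summxE rmorph_sum big_distrl /=.
rewrite exchange_big /=; apply: eq_bigr => j _.
rewrite big_distrr /=; apply: eq_bigr => k _.
by rewrite mxE rmorphM mulrA.
Qed.

Lemma normc2 {R : realType} (a b : R) : Normc.normc (a +i* b) ^+ 2 = a ^+ 2 + b ^+ 2.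
Proof. by rewrite /= sqr_sqrtr // addr_ge0 // sqr_ge0. Qed.

Lemma conjM_self {R : realType} (z : R[i]) : z^*%R * z = (Normc.normc z ^+ 2)%:C.
Proof. case: z => a b; rewrite normc2; simpc. apply/eqP; rewrite eq_complex /=. apply/andP; split; apply/eqP; ring. Qed.

Lemma braket_e_mk {R : realType} (e : 'I_3 -> 'cV[R[i]]_3) x i :
  (forall i j : 'I_3, braket (e i) (e j) = (i == j)%:R) ->
  braket (e i) (mk e x) = x i.
Proof.
move=> ho; rewrite braket_mkr (bigD1 i) //= ho eqxx mulr1 big1 ?addr0 //.
by move=> j /negbTE; rewrite ho eq_sym => ->; rewrite mulr0.
Qed.

Lemma braket_mk_mk {R : realType} (e : 'I_3 -> 'cV[R[i]]_3) x y :
  (forall i j : 'I_3, braket (e i) (e j) = (i == j)%:R) ->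
  braket (mk e x) (mk e y) = \sum_(j < 3) (x j)^*%R * y j.
Proof.
by move=> ho; rewrite braket_mkl; apply: eq_bigr => j _; rewrite braket_e_mk.
Qed.

Lemma ham_mk {R : realType} (e : 'I_3 -> 'cV[R[i]]_3) E x :
  (forall i j : 'I_3, braket (e i) (e j) = (i == j)%:R) ->
  hamiltonian e E (mk e x) = mk e (fun j => (E j)%:C * x j).
Proof.
by move=> ho; rewrite /hamiltonian /mk; apply: eq_bigr => j _; rewrite braket_e_mk.
Qed.

Lemma evo_mk {R : realType} (e : 'I_3 -> 'cV[R[i]]_3) E t x :
  (forall i j : 'I_3, braket (e i) (e j) = (i == j)%:R) ->
  evolution e E t (mk e x) = mk e (fun j => expi (- (E j * t)) * x j).
Proof.
by move=> ho; rewrite /evolution /mk; apply: eq_bigr => j _; rewrite braket_e_mk.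
Qed.

Lemma mk_comb {R : realType} (e : 'I_3 -> 'cV[R[i]]_3) x y z a b :
  mk e x - a *: mk e y - b *: mk e z = mk e (fun j => x j - a * y j - b * z j).
Proof.
rewrite /mk !scaler_sumr -!sumrB; apply: eq_bigr => j _.
by rewrite !scalerA !scalerBl.
Qed.

Lemma mk_scale {R : realType} (e : 'I_3 -> 'cV[R[i]]_3) x a :
  a *: mk e x = mk e (fun j => a * x j).
Proof. by rewrite /mk scaler_sumr; apply: eq_bigr => j _; rewrite scalerA. Qed.

Lemma mk0 {R : realType} (e : 'I_3 -> 'cV[R[i]]_3) : mk e (fun=> 0) = 0.
Proof. by rewrite /mk big1 // => j _; rewrite scale0r. Qed.

Lemma vnorm_mk {R : realType} (e : 'I_3 -> 'cV[R[i]]_3) x :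
  (forall i j : 'I_3, braket (e i) (e j) = (i == j)%:R) ->
  vnorm (mk e x) = Num.sqrt (\sum_(j < 3) Normc.normc (x j) ^+ 2).
Proof.
move=> ho; rewrite /vnorm; congr Num.sqrt; apply: complexI.
rewrite !rmorph_sum /=.
transitivity (braket (mk e x) (mk e x)).
  by rewrite /braket; apply: eq_bigr => k _; rewrite conjM_self.
by rewrite braket_mk_mk //; apply: eq_bigr => j _; rewrite conjM_self.
Qed.

Lemma conjR {R : realType} (x : R) : (x%:C)^*%R = x%:C.
Proof. by apply/eqP; rewrite eq_complex /= oppr0 !eqxx. Qed.

Definition V {R : realType} (e : 'I_3 -> 'cV[R[i]]_3) (c : 'I_3 -> R[i]) (r : 'I_3 -> R) :=
  mk e (fun j => c j * (r j)%:C).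

Lemma normcR {R : realType} (a : R) : Normc.normc (a%:C) = `|a|.
Proof. by rewrite /= expr0n /= addr0 sqrtr_sqr. Qed.

Lemma normcMR2 {R : realType} (z : R[i]) (a : R) :
  Normc.normc (z * a%:C) ^+ 2 = Normc.normc z ^+ 2 * a ^+ 2.
Proof. by rewrite Normc.normcM normcR exprMn real_normK ?num_real. Qed.

Lemma step_V {R : realType} (e : 'I_3 -> 'cV[R[i]]_3) E c s r b :
  (forall i j : 'I_3, braket (e i) (e j) = (i == j)%:R) ->
  let p j := Normc.normc (c j) ^+ 2 in
  let a := \sum_(j < 3) p j * r j ^+ 2 * E j in
  let t j := E j * r j - a * r j - b * s j in
  let b' := Num.sqrt (\sum_(j < 3) p j * t j ^+ 2) in
  lanczos_step (hamiltonian e E) (V e c s, V e c r, b) =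
    (V e c r, V e c (fun j => t j / b'), b').
Proof.
move=> ho p a t b'.
rewrite /lanczos_step /V ham_mk // braket_mk_mk //.
have -> : \sum_(j < 3) (c j * (r j)%:C)^*%R * ((E j)%:C * (c j * (r j)%:C)) = a%:C.
  rewrite /a rmorph_sum; apply: eq_bigr => j _.
  rewrite rmorphM /= conjR.
  transitivity ((c j)^*%R * c j * (r j * r j * E j)%:C).
    by rewrite !rmorphM /=; ring.
  by rewrite conjM_self -rmorphM /p; congr _%:C; ring.
rewrite mk_comb.
set A := mk e (fun j => _ - _ - _).
have -> : A = mk e (fun j => c j * (t j)%:C).
  rewrite /A /t; congr mk; apply: funext => j.
  rewrite !rmorphB !rmorphM /=; ring.
have -> : vnorm (mk e (fun j => c j * (t j)%:C)) = b'.
  rewrite vnorm_mk //; congr Num.sqrt; apply: eq_bigr => j _.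
  by rewrite normcMR2.
rewrite mk_scale; congr (_, _, _); congr mk; apply: funext => j.
by rewrite rmorphM fmorphV /=; ring.
Qed.

Lemma sum3 (M : nmodType) (F : 'I_3 -> M) :
  \sum_(j < 3) F j = F q1 + F q2 + F q3.
Proof.
rewrite !big_ord_recl big_ord0 addr0 addrA.
by congr (_ + _ + _); congr F; apply: val_inj.
Qed.

Lemma overlap {R : realType} (e : 'I_3 -> 'cV[R[i]]_3) E c t r :
  (forall i j : 'I_3, braket (e i) (e j) = (i == j)%:R) ->
  braket (V e c r) (evolution e E t (V e c (fun=> 1))) =
  \sum_(j < 3) (Normc.normc (c j) ^+ 2 * r j)%:C * expi (- (E j * t)).
Proof.
have -> : V e c (fun=> 1) = mk e c.
  by rewrite /V; congr mk; apply: funext => j; rewrite rmorph1 mulr1.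
move=> ho; rewrite evo_mk // /V braket_mk_mk //; apply: eq_bigr => j _.
rewrite rmorphM /= conjR rmorphM /=.
transitivity ((c j)^*%R * c j * (r j)%:C * expi (- (E j * t))); first by ring.
by rewrite conjM_self.
Qed.

Lemma norm3 {R : realType} (a1 a2 a3 x1 x2 x3 : R) :
  Normc.normc (a1%:C * expi x1 + a2%:C * expi x2 + a3%:C * expi x3) ^+ 2 =
  (a1 * cos x1 + a2 * cos x2 + a3 * cos x3) ^+ 2 +
  (a1 * sin x1 + a2 * sin x2 + a3 * sin x3) ^+ 2.
Proof. rewrite /expi; simpc; by rewrite normc2. Qed.

Lemma norm2 {R : realType} (a1 a2 x1 x2 : R) :
  Normc.normc (a1%:C * expi x1 - a2%:C * expi x2) ^+ 2 =
  (a1 * cos x1 - a2 * cos x2) ^+ 2 + (a1 * sin x1 - a2 * sin x2) ^+ 2.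
Proof. rewrite /expi; simpc; by rewrite normc2. Qed.

Lemma trig1 {R : realType} (A x y t : R) :
  A * sin ((x - y) * t / 2) * cos (- ((x + y) * t / 2)) =
  A * (sin (x * t) - sin (y * t)) / 2.
Proof.
have -> : x * t = (x + y) * t / 2 + (x - y) * t / 2 by field.
have -> : y * t = (x + y) * t / 2 - (x - y) * t / 2 by field.
rewrite cosN sinD sinB; by field.
Qed.

Lemma trig2 {R : realType} (A x y t : R) :
  A * sin ((x - y) * t / 2) * sin (- ((x + y) * t / 2)) =
  A * (cos (x * t) - cos (y * t)) / 2.
Proof.
have -> : x * t = (x + y) * t / 2 + (x - y) * t / 2 by field.
have -> : y * t = (x + y) * t / 2 - (x - y) * t / 2 by field.
rewrite sinN cosD cosB; by field.
Qed.

Lemma key {R : realType} (n1 n2 n3 E1 E2 E3 X1 X2 X3 Y1 Y2 Y3 a0 B a1 B2 : R) :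
  n1 ^+ 2 + n2 ^+ 2 + n3 ^+ 2 = 1 -> E1 != E2 -> E2 != E3 -> E1 != E3 ->
  a0 = n1 ^+ 2 * E1 + n2 ^+ 2 * E2 + n3 ^+ 2 * E3 ->
  B = Num.sqrt (n1 ^+ 2 * (E1 - a0) ^+ 2 + n2 ^+ 2 * (E2 - a0) ^+ 2
                + n3 ^+ 2 * (E3 - a0) ^+ 2) ->
  a1 = n1 ^+ 2 * ((E1 - a0) / B) ^+ 2 * E1 + n2 ^+ 2 * ((E2 - a0) / B) ^+ 2 * E2
       + n3 ^+ 2 * ((E3 - a0) / B) ^+ 2 * E3 ->
  B2 = Num.sqrt (
     n1 ^+ 2 * (E1 * ((E1 - a0) / B) - a1 * ((E1 - a0) / B) - B) ^+ 2
   + n2 ^+ 2 * (E2 * ((E2 - a0) / B) - a1 * ((E2 - a0) / B) - B) ^+ 2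
   + n3 ^+ 2 * (E3 * ((E3 - a0) / B) - a1 * ((E3 - a0) / B) - B) ^+ 2) ->
  0 +
  ((n1 ^+ 2 * ((E1 - a0) / B) * X1 + n2 ^+ 2 * ((E2 - a0) / B) * X2
    + n3 ^+ 2 * ((E3 - a0) / B) * X3) ^+ 2 +
   (n1 ^+ 2 * ((E1 - a0) / B) * - Y1 + n2 ^+ 2 * ((E2 - a0) / B) * - Y2
    + n3 ^+ 2 * ((E3 - a0) / B) * - Y3) ^+ 2) +
  2 *
  ((n1 ^+ 2 * ((E1 * ((E1 - a0) / B) - a1 * ((E1 - a0) / B) - B) / B2) * X1 +
    n2 ^+ 2 * ((E2 * ((E2 - a0) / B) - a1 * ((E2 - a0) / B) - B) / B2) * X2 +
    n3 ^+ 2 * ((E3 * ((E3 - a0) / B) - a1 * ((E3 - a0) / B) - B) / B2) * X3) ^+ 2 +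
   (n1 ^+ 2 * ((E1 * ((E1 - a0) / B) - a1 * ((E1 - a0) / B) - B) / B2) * - Y1 +
    n2 ^+ 2 * ((E2 * ((E2 - a0) / B) - a1 * ((E2 - a0) / B) - B) / B2) * - Y2 +
    n3 ^+ 2 * ((E3 * ((E3 - a0) / B) - a1 * ((E3 - a0) / B) - B) / B2) * - Y3) ^+ 2) =
  4 / ((n1 * n2) ^+ 2 * (E1 - E2) ^+ 2 + (n1 * n3) ^+ 2 * (E1 - E3) ^+ 2
       + (n2 * n3) ^+ 2 * (E2 - E3) ^+ 2) *
  (((n1 * n2) ^+ 2 * (E1 - E2) * (Y1 - Y2) / 2 +
    (n1 * n3) ^+ 2 * (E1 - E3) * (Y1 - Y3) / 2 +
    (n2 * n3) ^+ 2 * (E2 - E3) * (Y2 - Y3) / 2) ^+ 2 +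
   ((n1 * n2) ^+ 2 * (E1 - E2) * (X1 - X2) / 2 +
    (n1 * n3) ^+ 2 * (E1 - E3) * (X1 - X3) / 2 +
    (n2 * n3) ^+ 2 * (E2 - E3) * (X2 - X3) / 2) ^+ 2) +
  8 * (Num.sqrt ((n2 * n3) ^+ 2 * (E2 - E3) ^+ 2 + (n3 * n1) ^+ 2 * (E3 - E1) ^+ 2
                 + (n1 * n2) ^+ 2 * (E1 - E2) ^+ 2))^-1 ^+ 2
    * (n1 * n2) * (n2 * n3) * (n3 * n1) *
  (((E2 - E3) * (Y1 - Y2) / 2 - (E1 - E2) * (Y2 - Y3) / 2) ^+ 2 +
   ((E2 - E3) * (X1 - X2) / 2 - (E1 - E2) * (X2 - X3) / 2) ^+ 2).
Proof.
move=> hs d12 d23 d13 ha0 hB ha1 hB2.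
set S := n1 ^+ 2 + n2 ^+ 2 + n3 ^+ 2 in hs.
set q := n1 ^+ 2 * (E1 - a0) ^+ 2 + n2 ^+ 2 * (E2 - a0) ^+ 2 + n3 ^+ 2 * (E3 - a0) ^+ 2 in hB.
have q_ge0 : 0 <= q by rewrite /q; apply: addr_ge0; [apply: addr_ge0|]; apply: mulr_ge0; apply: sqr_ge0.
have hBq : B ^+ 2 = q by rewrite hB sqr_sqrtr.
have eb1 : (n1 * n2) ^+ 2 * (E1 - E2) ^+ 2 + (n1 * n3) ^+ 2 * (E1 - E3) ^+ 2
       + (n2 * n3) ^+ 2 * (E2 - E3) ^+ 2 = q.
  apply/eqP; rewrite -subr_eq0; apply/eqP.
  have -> : (n1 * n2) ^+ 2 * (E1 - E2) ^+ 2 + (n1 * n3) ^+ 2 * (E1 - E3) ^+ 2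
       + (n2 * n3) ^+ 2 * (E2 - E3) ^+ 2 - q =
     (S - 1) * (n1 ^+ 2 * E1 ^+ 2 + n2 ^+ 2 * E2 ^+ 2 + n3 ^+ 2 * E3 ^+ 2 - a0 ^+ 2).
    by rewrite /q /S ha0; ring.
  by rewrite hs subrr mul0r.
have eN : (n2 * n3) ^+ 2 * (E2 - E3) ^+ 2 + (n3 * n1) ^+ 2 * (E3 - E1) ^+ 2
                 + (n1 * n2) ^+ 2 * (E1 - E2) ^+ 2 = q.
  by rewrite -eb1; ring.
rewrite eb1 eN exprVn sqr_sqrtr //.
have hP3 : n3 ^+ 2 = 1 - n1 ^+ 2 - n2 ^+ 2 by rewrite -hs /S; ring.
have eT1 : (n1 * n2) ^+ 2 * (E1 - E2) * (Y1 - Y2) / 2 +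
    (n1 * n3) ^+ 2 * (E1 - E3) * (Y1 - Y3) / 2 +
    (n2 * n3) ^+ 2 * (E2 - E3) * (Y2 - Y3) / 2 =
    (n1 ^+ 2 * (E1 - a0) * Y1 + n2 ^+ 2 * (E2 - a0) * Y2 + n3 ^+ 2 * (E3 - a0) * Y3) / 2.
  rewrite !exprMn ha0 hP3; ring.
have eT2 : (n1 * n2) ^+ 2 * (E1 - E2) * (X1 - X2) / 2 +
    (n1 * n3) ^+ 2 * (E1 - E3) * (X1 - X3) / 2 +
    (n2 * n3) ^+ 2 * (E2 - E3) * (X2 - X3) / 2 =
    (n1 ^+ 2 * (E1 - a0) * X1 + n2 ^+ 2 * (E2 - a0) * X2 + n3 ^+ 2 * (E3 - a0) * X3) / 2.
  rewrite !exprMn ha0 hP3; ring.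
rewrite eT1 eT2.
have hL1 : (n1 ^+ 2 * ((E1 - a0) / B) * X1 + n2 ^+ 2 * ((E2 - a0) / B) * X2
    + n3 ^+ 2 * ((E3 - a0) / B) * X3) ^+ 2 +
   (n1 ^+ 2 * ((E1 - a0) / B) * - Y1 + n2 ^+ 2 * ((E2 - a0) / B) * - Y2
    + n3 ^+ 2 * ((E3 - a0) / B) * - Y3) ^+ 2 =
   ((n1 ^+ 2 * (E1 - a0) * X1 + n2 ^+ 2 * (E2 - a0) * X2 + n3 ^+ 2 * (E3 - a0) * X3) ^+ 2
   + (n1 ^+ 2 * (E1 - a0) * Y1 + n2 ^+ 2 * (E2 - a0) * Y2 + n3 ^+ 2 * (E3 - a0) * Y3) ^+ 2)
   * q^-1.
  by rewrite -hBq -exprVn; ring.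
rewrite hL1.
have hL2 : (n1 ^+ 2 * ((E1 * ((E1 - a0) / B) - a1 * ((E1 - a0) / B) - B) / B2) * X1 +
    n2 ^+ 2 * ((E2 * ((E2 - a0) / B) - a1 * ((E2 - a0) / B) - B) / B2) * X2 +
    n3 ^+ 2 * ((E3 * ((E3 - a0) / B) - a1 * ((E3 - a0) / B) - B) / B2) * X3) ^+ 2 +
   (n1 ^+ 2 * ((E1 * ((E1 - a0) / B) - a1 * ((E1 - a0) / B) - B) / B2) * - Y1 +
    n2 ^+ 2 * ((E2 * ((E2 - a0) / B) - a1 * ((E2 - a0) / B) - B) / B2) * - Y2 +
    n3 ^+ 2 * ((E3 * ((E3 - a0) / B) - a1 * ((E3 - a0) / B) - B) / B2) * - Y3) ^+ 2 =
   n1 ^+ 2 * n2 ^+ 2 * n3 ^+ 2 *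
   (((E2 - E3) * X1 + (E3 - E1) * X2 + (E1 - E2) * X3) ^+ 2 +
    ((E2 - E3) * Y1 + (E3 - E1) * Y2 + (E1 - E2) * Y3) ^+ 2) * q^-1.
  have [q0|qn0] := eqVneq q 0.
    have B0 : B = 0 by rewrite hB q0 sqrtr0.
    by rewrite B0 q0 !invr0; ring.
  have Bn0 : B != 0.
    by apply: contra qn0 => /eqP B0; rewrite -hBq B0 expr2 mulr0.
  pose g1 := (E1 - a1) * (E1 - a0) - q.
  pose g2 := (E2 - a1) * (E2 - a0) - q.
  pose g3 := (E3 - a1) * (E3 - a0) - q.
  have ht1 : E1 * ((E1 - a0) / B) - a1 * ((E1 - a0) / B) - B = g1 / B.
    by rewrite /g1 -hBq; field.
  have ht2 : E2 * ((E2 - a0) / B) - a1 * ((E2 - a0) / B) - B = g2 / B.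
    by rewrite /g2 -hBq; field.
  have ht3 : E3 * ((E3 - a0) / B) - a1 * ((E3 - a0) / B) - B = g3 / B.
    by rewrite /g3 -hBq; field.
  rewrite ht1 ht2 ht3; rewrite ht1 ht2 ht3 in hB2.
  have ha1' : a1 * q = n1 ^+ 2 * (E1 - a0) ^+ 2 * E1 + n2 ^+ 2 * (E2 - a0) ^+ 2 * E2
                       + n3 ^+ 2 * (E3 - a0) ^+ 2 * E3.
    by rewrite ha1 -hBq; field.
  have hG0 : n1 ^+ 2 * g1 + n2 ^+ 2 * g2 + n3 ^+ 2 * g3 = 0.
    by rewrite /g1 /g2 /g3 /q ha0 hP3; ring.
  have hG1 : n1 ^+ 2 * g1 * E1 + n2 ^+ 2 * g2 * E2 + n3 ^+ 2 * g3 * E3 = 0.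
    have h : n1 ^+ 2 * g1 * E1 + n2 ^+ 2 * g2 * E2 + n3 ^+ 2 * g3 * E3
      - (n1 ^+ 2 * (E1 - a0) ^+ 2 * E1 + n2 ^+ 2 * (E2 - a0) ^+ 2 * E2
         + n3 ^+ 2 * (E3 - a0) ^+ 2 * E3 - a1 * q) = 0.
      by rewrite /g1 /g2 /g3 /q ha0 hP3; ring.
    by move: h; rewrite -ha1' subrr subr0.
  have d23' : E2 - E3 != 0 by rewrite subr_eq0.
  have d12' : E1 - E2 != 0 by rewrite subr_eq0.
  have d31' : E3 - E1 != 0 by rewrite subr_eq0 eq_sym.
  pose mu := n1 ^+ 2 * g1 / (E2 - E3).
  have hG1m : n1 ^+ 2 * g1 = mu * (E2 - E3) by rewrite /mu; field.
  have hG2m : n2 ^+ 2 * g2 = mu * (E3 - E1).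
    have h : n2 ^+ 2 * g2 * (E2 - E3) = n1 ^+ 2 * g1 * (E3 - E1).
      apply/eqP; rewrite -subr_eq0; apply/eqP.
      have -> : n2 ^+ 2 * g2 * (E2 - E3) - n1 ^+ 2 * g1 * (E3 - E1) =
        (n1 ^+ 2 * g1 * E1 + n2 ^+ 2 * g2 * E2 + n3 ^+ 2 * g3 * E3)
        - E3 * (n1 ^+ 2 * g1 + n2 ^+ 2 * g2 + n3 ^+ 2 * g3) by ring.
      by rewrite hG0 hG1 mulr0 subrr.
    apply: (mulIf d23'); by by rewrite h /mu; field.
  have hG3m : n3 ^+ 2 * g3 = mu * (E1 - E2).
    have h : n3 ^+ 2 * g3 * (E2 - E3) = n1 ^+ 2 * g1 * (E1 - E2).
      apply/eqP; rewrite -subr_eq0; apply/eqP.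
      have -> : n3 ^+ 2 * g3 * (E2 - E3) - n1 ^+ 2 * g1 * (E1 - E2) =
        E2 * (n1 ^+ 2 * g1 + n2 ^+ 2 * g2 + n3 ^+ 2 * g3)
        - (n1 ^+ 2 * g1 * E1 + n2 ^+ 2 * g2 * E2 + n3 ^+ 2 * g3 * E3) by ring.
      by rewrite hG0 hG1 mulr0 subrr.
    apply: (mulIf d23'); by by rewrite h /mu; field.
  pose Vv := - ((E1 - E2) * (E2 - E3) * (E3 - E1)).
  have hV : (E2 - E3) * g1 + (E3 - E1) * g2 + (E1 - E2) * g3 = Vv.
    by rewrite /g1 /g2 /g3 /Vv; ring.
  have Vn0 : Vv != 0 by rewrite /Vv oppr_eq0 !mulf_neq0.
  have hQ2 : n1 ^+ 2 * g1 ^+ 2 + n2 ^+ 2 * g2 ^+ 2 + n3 ^+ 2 * g3 ^+ 2 = mu * Vv.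
    transitivity ((n1 ^+ 2 * g1) * g1 + (n2 ^+ 2 * g2) * g2 + (n3 ^+ 2 * g3) * g3).
      by ring.
    by rewrite hG1m hG2m hG3m -hV; ring.
  have hprod : n1 ^+ 2 * n2 ^+ 2 * n3 ^+ 2 * (mu * Vv) = mu ^+ 2 * q.
    rewrite -hQ2.
    transitivity (n2 ^+ 2 * n3 ^+ 2 * (n1 ^+ 2 * g1) ^+ 2 + n1 ^+ 2 * n3 ^+ 2 * (n2 ^+ 2 * g2) ^+ 2
       + n1 ^+ 2 * n2 ^+ 2 * (n3 ^+ 2 * g3) ^+ 2); first by ring.
    by rewrite hG1m hG2m hG3m -eb1; ring.
  have hB2' : B2 ^+ 2 = mu * Vv / q.
    rewrite hB2 sqr_sqrtr; last first.
      by apply: addr_ge0; [apply: addr_ge0|]; apply: mulr_ge0; apply: sqr_ge0.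
    by rewrite -hQ2 -hBq; field.
  transitivity ((((n1 ^+ 2 * g1) * X1 + (n2 ^+ 2 * g2) * X2 + (n3 ^+ 2 * g3) * X3) ^+ 2
     + ((n1 ^+ 2 * g1) * Y1 + (n2 ^+ 2 * g2) * Y2 + (n3 ^+ 2 * g3) * Y3) ^+ 2)
     * (B ^+ 2)^-1 * (B2 ^+ 2)^-1).
    by rewrite -!exprVn; ring.
  rewrite hG1m hG2m hG3m hBq hB2'.
  have [mu0|mun0] := eqVneq mu 0.
    have P0 : n1 ^+ 2 * n2 ^+ 2 * n3 ^+ 2 = 0.
      apply/eqP; apply: contraT => hPP.
      have h1 : n1 ^+ 2 != 0 by apply: contra hPP => /eqP ->; rewrite !mul0r.
      have h2 : n2 ^+ 2 != 0 by apply: contra hPP => /eqP ->; rewrite mulr0 !mul0r.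
      have h3 : n3 ^+ 2 != 0 by apply: contra hPP => /eqP ->; rewrite mulr0.
      have e1 : g1 = 0 by apply: (mulfI h1); rewrite hG1m mu0 !mul0r mulr0.
      have e2 : g2 = 0 by apply: (mulfI h2); rewrite hG2m mu0 !mul0r mulr0.
      have e3 : g3 = 0 by apply: (mulfI h3); rewrite hG3m mu0 !mul0r mulr0.
      by move: Vn0; rewrite -hV e1 e2 e3 !mulr0 !addr0 eqxx.
    by rewrite P0 mu0; ring.
  have P3e : n1 ^+ 2 * n2 ^+ 2 * n3 ^+ 2 = mu * q / Vv.
    apply: (mulIf (mulf_neq0 mun0 Vn0)); by rewrite hprod; field.
  rewrite P3e; field. by rewrite qn0 mun0 andbT; exact: Vn0.
rewrite hL2.
set iq := q^-1.
field.
by []. Qed.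

Theorem proposition4 (R : realType) (e : 'I_3 -> 'cV[R[i]]_3) (E : 'I_3 -> R)
    (c : 'I_3 -> R[i]) (t : R) :
  (forall i j : 'I_3, braket (e i) (e j) = (i == j)%:R) ->
  injective E ->
  \sum_(i < 3) cabs (c i) ^+ 2 = 1 ->
  let psi0 := \sum_(i < 3) c i *: e i in
  let C i j := cabs (c i) * cabs (c j) in
  let w i j := E i - E j in
  let b1sq := C q1 q2 ^+ 2 * w q1 q2 ^+ 2 + C q1 q3 ^+ 2 * w q1 q3 ^+ 2
              + C q2 q3 ^+ 2 * w q2 q3 ^+ 2 in
  let N := (Num.sqrt (C q2 q3 ^+ 2 * w q2 q3 ^+ 2 + C q3 q1 ^+ 2 * w q3 q1 ^+ 2
                      + C q1 q2 ^+ 2 * w q1 q2 ^+ 2))^-1 in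
  let term i j := (C i j ^+ 2 * w i j * sin (w i j * t / 2))%:C
                  * expi (- ((E i + E j) * t / 2)) in
  let Omega := (w q2 q3 * sin (w q1 q2 * t / 2))%:C * expi (- ((E q1 + E q2) * t / 2))
             - (w q1 q2 * sin (w q2 q3 * t / 2))%:C * expi (- ((E q2 + E q3) * t / 2)) in
  spread_complexity e E psi0 t =
    4 / b1sq * cabs (term q1 q2 + term q1 q3 + term q2 q3) ^+ 2
    + 8 * N ^+ 2 * C q1 q2 * C q2 q3 * C q3 q1 * cabs Omega ^+ 2.
Proof.
move=> ho Einj hsum psi0 C w b1sq N term Omega.
have psi0V : psi0 = V e c (fun=> 1).
  by rewrite /psi0 /V /mk; apply: eq_bigr => j _; rewrite rmorph1 mulr1.
have zeroV : (0 : 'cV[R[i]]_3) = V e c (fun=> 0).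
  by rewrite /V -(mk0 e); congr mk; apply: funext => j; rewrite rmorph0 mulr0.
Arguments krylov : simpl never.
Arguments lanczos_step : simpl never.
Arguments braket : simpl never.
Arguments evolution : simpl never.
Arguments hamiltonian : simpl never.
Arguments vnorm : simpl never.
set RHS := (4 / b1sq * _ + _).
rewrite /spread_complexity !big_ord_recr big_ord0 /= mul0r add0r !mul1r.
have L1 : lanczos (hamiltonian e E) psi0 1 =
  lanczos_step (hamiltonian e E) (0, psi0, 0) := erefl.
have L2 : lanczos (hamiltonian e E) psi0 2 =
  lanczos_step (hamiltonian e E) (lanczos (hamiltonian e E) psi0 1) := erefl.
pose p j := Normc.normc (c j) ^+ 2.
pose a0 := \sum_(j < 3) p j * 1 ^+ 2 * E j.
pose t1 j := E j * 1 - a0 * 1 - 0 * 0.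
pose B := Num.sqrt (\sum_(j < 3) p j * t1 j ^+ 2).
pose r1 j := t1 j / B.
pose a1 := \sum_(j < 3) p j * r1 j ^+ 2 * E j.
pose t2 j := E j * r1 j - a1 * r1 j - B * 1.
pose B2 := Num.sqrt (\sum_(j < 3) p j * t2 j ^+ 2).
pose r2 j := t2 j / B2.
have S1 : lanczos (hamiltonian e E) psi0 1 = (V e c (fun=> 1), V e c r1, B).
  rewrite L1.
  have -> : lanczos_step (hamiltonian e E) (0, psi0, 0) =
    lanczos_step (hamiltonian e E) (V e c (fun=> 0), V e c (fun=> 1), 0).
    by rewrite -zeroV -psi0V.
  by rewrite step_V.
have S2 : krylov (hamiltonian e E) psi0 2 = V e c r2.
  by rewrite /krylov L2 S1 step_V.
have S1' : krylov (hamiltonian e E) psi0 1 = V e c r1 by rewrite /krylov S1.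
rewrite S1' S2 psi0V !overlap // !sum3 !norm3 !cosN !sinN.
rewrite /RHS /cabs /term /Omega norm3 norm2 /w.
rewrite !trig1 !trig2.
have er1 : forall j, r1 j = (E j - a0) / B.
  by move=> j; rewrite /r1 /t1; congr (_ / _); ring.
have er2 : forall j, r2 j = (E j * ((E j - a0) / B) - a1 * ((E j - a0) / B) - B) / B2.
  by move=> j; rewrite /r2 /t2 er1 mulr1.
rewrite !er2 !er1.
apply: key.
- by move: hsum; rewrite sum3.
- by apply/eqP => /Einj.
- by apply/eqP => /Einj.
- by apply/eqP => /Einj.
- by rewrite /a0 sum3 /p; ring.
- by rewrite /B sum3 /t1 /p; congr Num.sqrt; ring.
- by rewrite /a1 sum3 !er1 /p.
- by rewrite /B2 sum3 /t2 !er1 /p; congr Num.sqrt; ring.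
Qed.
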